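(* Let $0<\epsilon<1$ and let $C_1,\ldots,C_n\in\mathbb{R}^3$ be a Pareto-optimal market for $\textsc{ProductDesign}(2)$. Let $r=\max\{\operatorname{ppu}(C_i): i\in\{1,\ldots,n\}\}$, $E=1/(1-\epsilon)$, $\ell=\lceil\log_E n\rceil$, and for $i\in\{0,\ldots,\ell\}$ let $H_i=\{(p,q_1,q_2)\in\mathbb{R}^3: p-q_1-q_2=r(1-\epsilon)^i\}$. Then for every product $P^*=(p^*,q_1^*,q_2^* )\in\mathbb{R}^3$ there exists a product $P\in H_i$ for some $i\in\{0,\ldots,\ell\}$ with $\operatorname{profit}(P)\ge(1-\epsilon)\operatorname{profit}(P^* )$.
   Context: A product $P=(p,q_1,q_2)$ has price $p$ and qualities $q_1,q_2$; its profit per unit is $\operatorname{ppu}(P)=p-q_1-q_2$. A customer $C_i=(p_i,q_{i,1},q_{i,2})$ buys $P$ iff $p\le p_i$ and $q_j\ge q_{i,j}$ for $j=1,2$. $\operatorname{profit}(P)=\operatorname{ppu}(P)\cdot|\{i: C_i \text{ buys } P\}|$. The market is Pareto-optimal: there are no two customers $C_i,C_j$ with $q_{i,k}>q_{j,k}$ for all $k$ and $p_i<p_j$. *)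

(* Defs.v *)
From Stdlib Require Import Reals Lra Lia ZArith List.
Open Scope R_scope.

(* A point of R^3: (price, quality 1, quality 2). Used both for products and customers. *)
Record pt3 : Type := Pt3 { price : R; qual1 : R; qual2 : R }.

Definition ppu (P : pt3) : R := price P - qual1 P - qual2 P.

Definition buys (C P : pt3) : Prop :=
  price P <= price C /\ qual1 P >= qual1 C /\ qual2 P >= qual2 C.

Definition buysb (P C : pt3) : bool :=
  if Rle_dec (price P) (price C) then
    if Rge_dec (qual1 P) (qual1 C) then
      if Rge_dec (qual2 P) (qual2 C) then true else false
    else false
  else false.

(* number of customers (with multiplicity) buying P *)
Definition nbuyers (cs : list pt3) (P : pt3) : nat :=
  length (filter (buysb P) cs).

Definition profit (cs : list pt3) (P : pt3) : R := ppu P * INR (nbuyers cs P).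

Definition pareto_optimal (cs : list pt3) : Prop :=
  forall Ci Cj, In Ci cs -> In Cj cs ->
    ~ (qual1 Ci > qual1 Cj /\ qual2 Ci > qual2 Cj /\ price Ci < price Cj).

Definition max_ppu (cs : list pt3) : R :=
  match cs with
  | nil => 0
  | c :: cs' => fold_right Rmax (ppu c) (map ppu cs')
  end.

Definition in_H (r eps : R) (i : nat) (P : pt3) : Prop := ppu P = r * (1 - eps) ^ i.

(* Main.v *)
Require Import Defs.
From Stdlib Require Import Reals List ZArith Lra Lia.
Open Scope R_scope.

Lemma buysb_iff P C : buysb P C = true <-> buys C P.
Proof.
  unfold buysb, buys.
  destruct (Rle_dec (price P) (price C)); destruct (Rge_dec (qual1 P) (qual1 C));
  destruct (Rge_dec (qual2 P) (qual2 C));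
  split; intros H; try tauto; try discriminate; lra.
Qed.

Lemma nbuyers_mono cs P1 P2 :
  (forall C, buys C P1 -> buys C P2) -> (nbuyers cs P1 <= nbuyers cs P2)%nat.
Proof.
  intros H. unfold nbuyers. induction cs as [|c cs IH]; simpl; [lia|].
  destruct (buysb P1 c) eqn:E1; destruct (buysb P2 c) eqn:E2; simpl; try lia.
  apply buysb_iff, H, buysb_iff in E1. congruence.
Qed.

Lemma nbuyers_le cs P : (nbuyers cs P <= length cs)%nat.
Proof.
  unfold nbuyers. induction cs; simpl; [lia|]. destruct (buysb P a); simpl; lia.
Qed.

Lemma nbuyers_pos cs P : (0 < nbuyers cs P)%nat -> exists C, In C cs /\ buys C P.
Proof.
  unfold nbuyers. induction cs as [|c cs IH]; simpl; [lia|].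
  destruct (buysb P c) eqn:E; simpl; intros H.
  - exists c. split; [auto|]. apply buysb_iff; auto.
  - destruct (IH H) as [C [? ?]]. eauto.
Qed.

Lemma nbuyers_self cs C : In C cs -> (1 <= nbuyers cs C)%nat.
Proof.
  unfold nbuyers. induction cs as [|c cs IH]; simpl; [tauto|].
  intros [->|H].
  - assert (buysb C C = true) by (apply buysb_iff; unfold buys; lra).
    rewrite H; simpl; lia.
  - destruct (buysb C c); simpl; specialize (IH H); lia.
Qed.

Lemma nbuyers_zero cs P : (forall C, In C cs -> ~ buys C P) -> nbuyers cs P = 0%nat.
Proof.
  intros H. destruct (nbuyers cs P) eqn:E; auto.
  destruct (nbuyers_pos cs P) as [C [? ?]]; [lia|]. exfalso; eapply H; eauto.
Qed.

Lemma max_ppu_spec cs : cs <> nil ->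
  (exists C, In C cs /\ ppu C = max_ppu cs) /\ forall C, In C cs -> ppu C <= max_ppu cs.
Proof.
  destruct cs as [|c cs]; [congruence|]. intros _. simpl.
  induction cs as [|d cs IH]; simpl.
  - split; [exists c; auto|]. intros C [->|[]]; lra.
  - destruct IH as [[C [HC HE]] Hall].
    split.
    + destruct (Rle_dec (ppu d) (fold_right Rmax (ppu c) (map ppu cs))).
      * exists C. split; [destruct HC; auto|]. rewrite Rmax_right; auto.
      * exists d. split; auto. rewrite Rmax_left; lra.
    + intros C0 [->|[->|H]].
      * pose proof (Hall C0 (or_introl eq_refl)). pose proof (Rmax_r (ppu d) (fold_right Rmax (ppu C0) (map ppu cs))). lra.
      * apply Rmax_l.
      * pose proof (Hall C0 (or_intror H)). pose proof (Rmax_r (ppu d) (fold_right Rmax (ppu c) (map ppu cs))). lra.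
Qed.

Lemma lower_bound cs : exists m, forall C, In C cs -> m <= qual1 C.
Proof.
  induction cs as [|c cs [m Hm]]; simpl.
  - exists 0. tauto.
  - exists (Rmin m (qual1 c)). intros C [->|H].
    + apply Rmin_r.
    + pose proof (Hm C H). pose proof (Rmin_l m (qual1 c)). lra.
Qed.

Lemma min_index (f : nat -> Prop) (dec : forall i, f i \/ ~ f i) m :
  f m -> exists i, (i <= m)%nat /\ f i /\ (i = 0%nat \/ ~ f (pred i)).
Proof.
  induction m as [|m IH]; intros H.
  - exists 0%nat. auto.
  - destruct (dec m) as [Hm|Hm].
    + destruct (IH Hm) as [i [? ?]]. exists i. split; [lia|auto].
    + exists (S m). simpl. auto.
Qed.

Theorem lemma3 (eps : R) (cs : list pt3) :
  0 < eps < 1 ->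
  cs <> nil ->
  pareto_optimal cs ->
  let n := length cs in
  let r := max_ppu cs in
  let E := 1 / (1 - eps) in
  let l := Zceil (ln (INR n) / ln E) in
  forall Pstar : pt3,
    exists (i : nat) (P : pt3),
      (Z.of_nat i <= l)%Z /\ in_H r eps i P /\
      profit cs P >= (1 - eps) * profit cs Pstar.
Proof.
  intros Heps Hne _ n r E l Pstar.
  destruct (max_ppu_spec cs Hne) as [[C0 [HC0 HrC0]] Hmax].
  fold r in HrC0, Hmax.
  assert (Hn1 : 1 <= INR n).
  { unfold n. destruct cs; [congruence|]. simpl length. rewrite S_INR. pose proof (pos_INR (length cs)). lra. }
  assert (HlnE : ln E = - ln (1 - eps)).
  { unfold E. rewrite <- ln_Rinv by lra. f_equal. field. lra. }
  assert (Hln1e : ln (1 - eps) < 0).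
  { rewrite <- ln_1. apply ln_increasing; lra. }
  assert (Hlnn : 0 <= ln (INR n)).
  { destruct (Req_dec (INR n) 1) as [->|Hne1]; [rewrite ln_1; lra|].
    rewrite <- ln_1. left. apply ln_increasing; lra. }
  assert (Hl0 : (0 <= l)%Z).
  { unfold l. destruct (Zceil_bound (ln (INR n) / ln E)) as [_ H].
    assert (0 <= ln (INR n) / ln E).
    { unfold Rdiv. apply Rmult_le_pos; auto. left. apply Rinv_0_lt_compat. lra. }
    apply le_IZR. lra. }
  set (m := Z.to_nat l).
  assert (Hml : Z.of_nat m = l) by (unfold m; lia).
  assert (Hpowm : INR n * (1 - eps) ^ m <= 1).
  { destruct (Zceil_bound (ln (INR n) / ln E)) as [_ H]. fold l in H.
    rewrite <- Hml, <- INR_IZR_INZ in H.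
    assert (Hp : 0 < (1 - eps) ^ m) by (apply pow_lt; lra).
    assert (Hle : ln (INR n * (1 - eps) ^ m) <= 0).
    { rewrite ln_mult by lra. rewrite ln_pow by lra.
      assert (ln (INR n) <= INR m * ln E).
      { assert (Hq : ln (INR n) / ln E * ln E = ln (INR n)) by (field; lra).
        rewrite <- Hq. apply Rmult_le_compat_r; lra. }
      rewrite HlnE in H0. lra. }
    destruct (Rle_dec (INR n * (1 - eps) ^ m) 1) as [?|Hgt]; auto.
    exfalso. assert (ln 1 < ln (INR n * (1 - eps) ^ m)) by (apply ln_increasing; lra).
    rewrite ln_1 in H0. lra. }
  destruct (Rle_dec (profit cs Pstar) 0) as [Hp0|Hp0].
  - (* nobody buys *)
    destruct (lower_bound cs) as [mq Hmq].
    exists 0%nat, (Pt3 (r + 2 * (mq - 1)) (mq - 1) (mq - 1)).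
    split; [lia|]. split.
    + unfold in_H, ppu; simpl; lra.
    + unfold profit at 1. rewrite nbuyers_zero.
      * change (INR 0) with 0. rewrite Rmult_0_r. pose proof (Rmult_le_compat_l (1 - eps) _ _ ltac:(lra) Hp0). lra.
      * intros C HC [_ [H _]]. simpl in H. pose proof (Hmq C HC). lra.
  - apply Rnot_le_lt in Hp0.
    set (x := ppu Pstar) in *. set (k := nbuyers cs Pstar).
    assert (Hprof : profit cs Pstar = x * INR k) by reflexivity.
    assert (Hk : (0 < k)%nat).
    { destruct k eqn:Ek; [|lia]. rewrite Hprof in Hp0. simpl in Hp0. lra. }
    assert (Hx : 0 < x).
    { rewrite Hprof in Hp0. destruct (Rle_dec x 0); [|lra].
      pose proof (pos_INR k). pose proof (Rmult_le_compat_r (INR k) x 0 H r0). lra. }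
    destruct (nbuyers_pos cs Pstar Hk) as [C1 [HC1 HbC1]].
    assert (Hxr : x <= r).
    { pose proof (Hmax C1 HC1). unfold x, ppu in *. destruct HbC1 as [? [? ?]]. lra. }
    destruct (Rlt_dec x (r * (1 - eps) ^ m)) as [Hsmall|Hbig].
    +
      exists 0%nat, C0. split; [lia|]. split.
      * unfold in_H. simpl. lra.
      * rewrite Hprof. unfold profit. rewrite HrC0.
        pose proof (nbuyers_self cs C0 HC0) as H1. apply le_INR in H1.
        pose proof (nbuyers_le cs Pstar) as H2. apply le_INR in H2. fold k n in H2.
        simpl in H1.
        assert (x * INR k <= x * INR n) by (apply Rmult_le_compat_l; lra).
        assert (x * INR n <= r * (1 - eps) ^ m * INR n) by (apply Rmult_le_compat_r; lra).
        assert (r * (1 - eps) ^ m * INR n <= r) by (assert (0 < r) by lra; nra).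
        assert (r <= r * INR (nbuyers cs C0)) by nra.
        nra.
    + apply Rnot_lt_le in Hbig.
      destruct (min_index (fun i => r * (1 - eps) ^ i <= x)
                  (fun i => match Rle_dec (r * (1 - eps) ^ i) x with left h => or_introl h | right h => or_intror h end)
                  m Hbig) as [i [Him [Hfi Hmin]]].
      set (lev := r * (1 - eps) ^ i) in *.
      exists i, (Pt3 (price Pstar - (x - lev)) (qual1 Pstar) (qual2 Pstar)).
      split; [lia|]. split.
      * unfold in_H, ppu; simpl. unfold x, ppu, lev. lra.
      * assert (Hlev : (1 - eps) * x <= lev).
        { destruct Hmin as [->|Hmin].
          - unfold lev. simpl. nra.
          - apply Rnot_le_lt in Hmin. destruct i as [|i]; [unfold lev; simpl; nra|].
            simpl in Hmin. unfold lev. simpl.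
            replace (r * ((1 - eps) * (1 - eps) ^ i)) with ((1 - eps) * (r * (1 - eps) ^ i)) by ring.
            apply Rmult_le_compat_l; lra. }
        unfold profit at 1. unfold ppu at 1; simpl.
        replace (price Pstar - (x - lev) - qual1 Pstar - qual2 Pstar) with lev by (unfold x, ppu; ring).
        rewrite Hprof.
        assert (Hkk : (k <= nbuyers cs (Pt3 (price Pstar - (x - lev)) (qual1 Pstar) (qual2 Pstar)))%nat).
        { apply nbuyers_mono. intros C [? [? ?]]. unfold buys; simpl. lra. }
        apply le_INR in Hkk.
        pose proof (pos_INR k).
        assert (0 <= lev) by (unfold lev; pose proof (pow_le (1 - eps) i ltac:(lra)); nra).
        nra.
Qed.
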